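(* Any homomorphism between special 2-groups is isomorphic, in the 2-category $\mathrm{C2G}$, to a special homomorphism.
   Context: A coherent 2-group is a weak monoidal category in which all morphisms are invertible and each object $x$ is equipped with an adjoint equivalence $(x,\bar x,i_x,e_x)$ ($i_x\colon 1\to x\otimes\bar x$, $e_x\colon\bar x\otimes x\to 1$ isomorphisms satisfying the zig-zag identities). A special 2-group is a coherent 2-group whose underlying category is skeletal (isomorphic objects are equal) and whose left unitor, right unitor, units $i$ and counits $e$ are identity natural transformations. A homomorphism of coherent 2-groups is a weak monoidal functor $F$ (structure maps $F_2\colon F(x)\otimes F(y)\to F(x\otimes y)$, $F_0\colon 1'\to F(1)$); it is special if it goes between special 2-groups and $F_0$ is an identity morphism. $\mathrm{C2G}$ is the strict 2-category of coherent 2-groups, weak monoidal functors and monoidal natural transformations; ''isomorphic'' means related by an invertible monoidal natural transformation. *)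

(* Defs.v *)
Record TwoGroup := {
  ob : Type;
  hom : ob -> ob -> Type;
  idm : forall {a}, hom a a;
  comp : forall {a b c}, hom b c -> hom a b -> hom a c;
  inv : forall {a b}, hom a b -> hom b a;
  comp_assoc : forall a b c d (h : hom c d) (g : hom b c) (f : hom a b),
      comp h (comp g f) = comp (comp h g) f;
  comp_id_l : forall a b (f : hom a b), comp idm f = f;
  comp_id_r : forall a b (f : hom a b), comp f idm = f;
  inv_l : forall a b (f : hom a b), comp (inv f) f = idm;
  inv_r : forall a b (f : hom a b), comp f (inv f) = idm;
  tens : ob -> ob -> ob;
  tensm : forall {a b c d}, hom a b -> hom c d -> hom (tens a c) (tens b d);
  tens_id : forall a c, tensm (@idm a) (@idm c) = idm;
  tens_comp : forall a b e c d k (f : hom a b) (g : hom b e) (h : hom c d) (l : hom d k),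
      tensm (comp g f) (comp l h) = comp (tensm g l) (tensm f h);
  I : ob;
  assoc : forall x y z, hom (tens (tens x y) z) (tens x (tens y z));
  assoc_nat : forall x x' y y' z z' (f : hom x x') (g : hom y y') (h : hom z z'),
      comp (assoc x' y' z') (tensm (tensm f g) h) = comp (tensm f (tensm g h)) (assoc x y z);
  lunit : forall x, hom (tens I x) x;
  lunit_nat : forall x x' (f : hom x x'), comp (lunit x') (tensm (@idm I) f) = comp f (lunit x);
  runit : forall x, hom (tens x I) x;
  runit_nat : forall x x' (f : hom x x'), comp (runit x') (tensm f (@idm I)) = comp f (runit x);
  pentagon : forall w x y z,
      comp (assoc w x (tens y z)) (assoc (tens w x) y z)
      = comp (tensm idm (assoc x y z)) (comp (assoc w (tens x y) z) (tensm (assoc w x y) idm));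
  triangle : forall x y, comp (tensm idm (lunit y)) (assoc x I y) = tensm (runit x) idm;
  dual : ob -> ob;
  coev : forall x, hom I (tens x (dual x));
  ev : forall x, hom (tens (dual x) x) I;
  zigzag1 : forall x,
      comp (runit x) (comp (tensm idm (ev x)) (comp (assoc x (dual x) x)
        (comp (tensm (coev x) idm) (inv (lunit x))))) = idm;
  zigzag2 : forall x,
      comp (lunit (dual x)) (comp (tensm (ev x) idm) (comp (inv (assoc (dual x) x (dual x)))
        (comp (tensm idm (coev x)) (inv (runit (dual x)))))) = idm
}.

Arguments idm {t a}.
Arguments comp {t a b c}.
Arguments inv {t a b}.
Arguments tens {t}.
Arguments tensm {t a b c d}.
Arguments I {t}.
Arguments assoc {t}.
Arguments lunit {t}.
Arguments runit {t}.
Arguments dual {t}.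
Arguments coev {t}.
Arguments ev {t}.

Definition eq_hom {G : TwoGroup} {a b : ob G} (p : a = b) : hom G a b :=
  match p in _ = b' return hom G a b' with eq_refl => idm end.

Definition is_identity {G : TwoGroup} {a b : ob G} (f : hom G a b) : Prop :=
  exists p : a = b, f = eq_hom p.

Definition special (G : TwoGroup) : Prop :=
  (forall (x y : ob G) (f : hom G x y), x = y) /\
  (forall x : ob G, is_identity (lunit x)) /\
  (forall x : ob G, is_identity (runit x)) /\
  (forall x : ob G, is_identity (coev x)) /\
  (forall x : ob G, is_identity (ev x)).

(* Homomorphism of coherent 2-groups = weak monoidal functor. *)
Record Hom2 (G H : TwoGroup) := {
  fob : ob G -> ob H;
  fmor : forall {a b}, hom G a b -> hom H (fob a) (fob b);
  fmor_id : forall a, fmor (@idm G a) = idm;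
  fmor_comp : forall a b c (g : hom G b c) (f : hom G a b), fmor (comp g f) = comp (fmor g) (fmor f);
  F2 : forall x y, hom H (tens (fob x) (fob y)) (fob (tens x y));
  F2_nat : forall x x' y y' (f : hom G x x') (g : hom G y y'),
      comp (F2 x' y') (tensm (fmor f) (fmor g)) = comp (fmor (tensm f g)) (F2 x y);
  F0 : hom H I (fob I);
  F_assoc : forall x y z,
      comp (fmor (assoc x y z)) (comp (F2 (tens x y) z) (tensm (F2 x y) idm))
      = comp (F2 x (tens y z)) (comp (tensm idm (F2 y z)) (assoc (fob x) (fob y) (fob z)));
  F_lunit : forall x,
      comp (fmor (lunit x)) (comp (F2 I x) (tensm F0 idm)) = lunit (fob x);
  F_runit : forall x,
      comp (fmor (runit x)) (comp (F2 x I) (tensm idm F0)) = runit (fob x)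
}.

Arguments fob {G H}.
Arguments fmor {G H} _ {a b}.
Arguments F2 {G H}.
Arguments F0 {G H}.

Record MonNat {G H : TwoGroup} (F F' : Hom2 G H) := {
  theta : forall x, hom H (fob F x) (fob F' x);
  theta_nat : forall x y (f : hom G x y), comp (theta y) (fmor F f) = comp (fmor F' f) (theta x);
  theta_tens : forall x y,
      comp (theta (tens x y)) (F2 F x y) = comp (F2 F' x y) (tensm (theta x) (theta y));
  theta_unit : comp (theta I) (F0 F) = F0 F'
}.

Arguments theta {G H F F'}.

Definition iso_hom {G H : TwoGroup} (F F' : Hom2 G H) : Prop :=
  exists (t : MonNat F F') (u : MonNat F' F),
    forall x, comp (theta u x) (theta t x) = idm /\ comp (theta t x) (theta u x) = idm.

Definition special_hom {G H : TwoGroup} (F : Hom2 G H) : Prop :=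
  special G /\ special H /\ is_identity (F0 F).

(* Main.v *)
Require Import Defs.

From Stdlib Require Import ProofIrrelevance.

Lemma cA {H : TwoGroup} {a b c d} (h : hom H c d) (g : hom H b c) (f : hom H a b) :
  comp (comp h g) f = comp h (comp g f).
Proof. symmetry; apply comp_assoc. Qed.

Lemma pre {H : TwoGroup} {a b c d} (g : hom H b c) (f : hom H a b) (k : hom H a c) :
  comp g f = k -> forall (h : hom H d a), comp g (comp f h) = comp k h.
Proof. intros E h. rewrite comp_assoc, E. reflexivity. Qed.

Lemma cid_l {H : TwoGroup} {a b} (f : hom H a b) : comp idm f = f.
Proof. apply comp_id_l. Qed.
Lemma cid_r {H : TwoGroup} {a b} (f : hom H a b) : comp f idm = f.
Proof. apply comp_id_r. Qed.
Lemma iL {H : TwoGroup} {a b} (f : hom H a b) : comp (inv f) f = idm.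
Proof. apply inv_l. Qed.
Lemma iR {H : TwoGroup} {a b} (f : hom H a b) : comp f (inv f) = idm.
Proof. apply inv_r. Qed.
Lemma iL' {H : TwoGroup} {a b c} (f : hom H a b) (h : hom H c a) : comp (inv f) (comp f h) = h.
Proof. rewrite comp_assoc, iL, cid_l. reflexivity. Qed.
Lemma iR' {H : TwoGroup} {a b c} (f : hom H a b) (h : hom H c b) : comp f (comp (inv f) h) = h.
Proof. rewrite comp_assoc, iR, cid_l. reflexivity. Qed.

Lemma inv_uniq {H : TwoGroup} {a b} (f : hom H a b) (g : hom H b a) :
  comp g f = idm -> g = inv f.
Proof. intros E. rewrite <- (cid_r g), <- (iR f), comp_assoc, E, cid_l. reflexivity. Qed.

Lemma inv_comp {H : TwoGroup} {a b c} (g : hom H b c) (f : hom H a b) :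
  inv (comp g f) = comp (inv f) (inv g).
Proof. symmetry; apply inv_uniq. rewrite cA, iL', iL. reflexivity. Qed.

Lemma inv_inv {H : TwoGroup} {a b} (f : hom H a b) : inv (inv f) = f.
Proof. symmetry; apply inv_uniq. apply iR. Qed.

Lemma tid {H : TwoGroup} a c : tensm (@idm H a) (@idm H c) = idm.
Proof. apply tens_id. Qed.

Lemma tc {H : TwoGroup} {a b e c d k} (f : hom H a b) (g : hom H b e) (h : hom H c d) (l : hom H d k) :
  comp (tensm g l) (tensm f h) = tensm (comp g f) (comp l h).
Proof. symmetry; apply tens_comp. Qed.

Lemma inv_tens {H : TwoGroup} {a b c d} (f : hom H a b) (g : hom H c d) :
  inv (tensm f g) = tensm (inv f) (inv g).
Proof. symmetry; apply inv_uniq. rewrite tc, !iL. apply tid. Qed.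

Lemma inv_id {H : TwoGroup} a : inv (@idm H a) = idm.
Proof. symmetry; apply inv_uniq. apply cid_l. Qed.

Lemma move_inv {H : TwoGroup} {a b c d} (h : hom H b d) (f : hom H a b) (g : hom H c d) (k : hom H a c) :
  comp h f = comp g k -> comp (inv g) h = comp k (inv f).
Proof. intros E. rewrite <- (cid_r (comp (inv g) h)), <- (iR f), cA, (pre _ _ _ E), cA, iL'. reflexivity. Qed.

Lemma ts1 {H : TwoGroup} {a b e c d} (f : hom H a b) (g : hom H b e) (h : hom H c d) :
  tensm (comp g f) h = comp (tensm g idm) (tensm f h).
Proof. rewrite tc, cid_l. reflexivity. Qed.
Lemma ts2 {H : TwoGroup} {a b e c d} (f : hom H a b) (g : hom H b e) (h : hom H c d) :
  tensm h (comp g f) = comp (tensm idm g) (tensm h f).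
Proof. rewrite tc, cid_l. reflexivity. Qed.

Lemma pre3 {H : TwoGroup} {a b c d e} (g : hom H b c) (f : hom H a b) (f0 : hom H e a) (k : hom H e c) :
  comp g (comp f f0) = k -> forall (h : hom H d e), comp g (comp f (comp f0 h)) = comp k h.
Proof. intros E h. rewrite comp_assoc, <- E, !cA. reflexivity. Qed.

Lemma ts3 {H : TwoGroup} {a b c d} (f : hom H a b) (g : hom H c d) :
  tensm f g = comp (tensm f idm) (tensm idm g).
Proof. rewrite tc, cid_l, cid_r. reflexivity. Qed.
Lemma ts4 {H : TwoGroup} {a b c d} (f : hom H a b) (g : hom H c d) :
  tensm f g = comp (tensm idm g) (tensm f idm).
Proof. rewrite tc, cid_l, cid_r. reflexivity. Qed.


Tactic Notation "rw" open_constr(E) := first [rewrite (pre _ _ _ E) | rewrite (pre3 _ _ _ _ E) | rewrite E]; rewrite ?cA.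

Definition F2t {G H : TwoGroup} (F : Hom2 G H) (th : forall x, hom H (fob F x) (fob F x)) x y :=
  comp (th (tens x y)) (comp (F2 F x y) (tensm (inv (th x)) (inv (th y)))).

Lemma thinv_nat {G H : TwoGroup} (F : Hom2 G H) (th : forall x, hom H (fob F x) (fob F x))
  (thn : forall x y (f : hom G x y), comp (th y) (fmor F f) = comp (fmor F f) (th x)) x y (f : hom G x y) :
  comp (inv (th y)) (fmor F f) = comp (fmor F f) (inv (th x)).
Proof. apply move_inv. symmetry. apply thn. Qed.

Definition transp {G H : TwoGroup} (F : Hom2 G H) (th : forall x, hom H (fob F x) (fob F x))
  (thn : forall x y (f : hom G x y), comp (th y) (fmor F f) = comp (fmor F f) (th x)) : Hom2 G H.
Proof.
  refine {| fob := fob F; fmor := fun a b f => fmor F f; F2 := F2t F th;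
            F0 := comp (th I) (F0 F) |}.
  - apply fmor_id.
  - apply fmor_comp.
  - intros. unfold F2t. rewrite ?cA, tc, !thinv_nat, <- tc by exact thn.
    rw (F2_nat _ _ F _ _ _ _ _ _). rewrite <- ?cA, thn. reflexivity.
  - intros. unfold F2t.
    rewrite ?cA. rw (eq_sym (thn _ _ _)). rw (tc _ _ _ _). rewrite iL', cid_r, ts1, ?cA.
    rewrite (pre _ _ _ (tc (th (tens x y)) (inv (th (tens x y))) idm (inv (th z)))), iL, cid_r.
    rw (tc _ _ _ _). rewrite cid_l, cid_r, ts1, ts2, ?cA.
    rw (F_assoc _ _ F _ _ _). rewrite ?cA. rw (assoc_nat _ _ _ _ _ _ _ _ _ _). reflexivity.
  - intros. unfold F2t. rewrite ?cA. rw (eq_sym (thn _ _ _)). rw (tc _ _ _ _).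
    rewrite iL', cid_r. rewrite (ts3 (F0 F)), ?cA. rw (F_lunit _ _ F _).
    rw (lunit_nat _ _ _ _). apply iR'.
  - intros. unfold F2t. rewrite ?cA. rw (eq_sym (thn _ _ _)). rw (tc _ _ _ _).
    rewrite iL', cid_r. rewrite (ts4 _ (F0 F)), ?cA. rw (F_runit _ _ F _).
    rw (runit_nat _ _ _ _). apply iR'.
Defined.

Definition tnat {G H : TwoGroup} (F : Hom2 G H) th thn : MonNat F (transp F th thn).
Proof.
  refine (Build_MonNat _ _ F (transp F th thn) th _ _ _).
  - intros; simpl. apply thn.
  - intros; simpl. unfold F2t. rewrite ?cA, tc, !iL, tid, cid_r. reflexivity.
  - reflexivity.
Defined.

Definition tnat' {G H : TwoGroup} (F : Hom2 G H) th thn : MonNat (transp F th thn) F.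
Proof.
  refine (Build_MonNat _ _ (transp F th thn) F (fun x => inv (th x)) _ _ _).
  - intros; simpl. apply thinv_nat. exact thn.
  - intros; simpl. unfold F2t. apply iL'.
  - simpl. apply iL'.
Defined.

Lemma transp_iso {G H : TwoGroup} (F : Hom2 G H) th thn : iso_hom F (transp F th thn).
Proof.
  exists (tnat F th thn), (tnat' F th thn). intros x; simpl. split; [apply iL | apply iR].
Qed.

Lemma rinv_nat {H : TwoGroup} {a b} (f : hom H a b) :
  comp (inv (runit b)) f = comp (tensm f idm) (inv (runit a)).
Proof. apply move_inv. symmetry. apply runit_nat. Qed.

Lemma F2_nat_l {G H : TwoGroup} (F : Hom2 G H) {x x'} y (f : hom G x x') :
  comp (F2 F x' y) (tensm (fmor F f) idm) = comp (fmor F (tensm f idm)) (F2 F x y).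
Proof. rewrite <- (fmor_id _ _ F y). apply F2_nat. Qed.

Lemma Fcomm {G H : TwoGroup} (F : Hom2 G H) {a b b' c} (g : hom G b c) (f : hom G a b)
  (g' : hom G b' c) (f' : hom G a b') :
  comp g f = comp g' f' -> comp (fmor F g) (fmor F f) = comp (fmor F g') (fmor F f').
Proof. intros E. rewrite <- !fmor_comp, E. reflexivity. Qed.

Definition thx {G H : TwoGroup} (F : Hom2 G H) (b : hom H I (fob F I)) x : hom H (fob F x) (fob F x) :=
  comp (fmor F (runit x)) (comp (F2 F x I) (comp (tensm idm b) (inv (runit (fob F x))))).

Lemma thx_nat {G H : TwoGroup} (F : Hom2 G H) (b : hom H I (fob F I)) :
  forall x y (f : hom G x y), comp (thx F b y) (fmor F f) = comp (fmor F f) (thx F b x).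
Proof.
  intros. unfold thx. rewrite ?cA. rw (rinv_nat _). rw (tc _ _ _ _). rewrite cid_l, cid_r.
  rewrite (ts3 (fmor F f) b), ?cA. rw (F2_nat_l F _ _). rw (Fcomm F _ _ _ _ (runit_nat _ _ _ _)). reflexivity.
Qed.

Lemma thx_unit {G H : TwoGroup} (F : Hom2 G H) (b : hom H I (fob F I))
  (E : @runit H I = lunit I) : comp (thx F b I) (F0 F) = b.
Proof.
  unfold thx. rewrite ?cA. rw (rinv_nat _). rw (tc _ _ _ _). rewrite cid_l, cid_r.
  assert (T : tensm (F0 F) b = comp (tensm idm (F0 F)) (tensm (F0 F) (comp (inv (F0 F)) b))).
  { rewrite tc, cid_l, iR'. reflexivity. }
  rewrite T, ?cA. rw (F_runit _ _ F _). rewrite (ts3 (F0 F)), ?cA. rw (runit_nat _ _ _ _).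
  rewrite ?cA, E. rw (lunit_nat _ _ _ _). rewrite iR, cid_r. apply iR'.
Qed.

Theorem proposition8p10 (G H : TwoGroup) (sG : special G) (sH : special H)
  (F : Hom2 G H) :
  exists F' : Hom2 G H, special_hom F' /\ iso_hom F F'.
Proof.
  pose proof sH as sH'.
  destruct sH' as [sk [hl [hr _]]].
  assert (E : @runit H I = lunit I).
  { destruct (hl I) as [p1 e1]. destruct (hr I) as [p2 e2]. rewrite e1, e2.
    rewrite (proof_irrelevance _ p1 p2). reflexivity. }
  set (p := sk _ _ (F0 F)).
  exists (transp F (thx F (eq_hom p)) (thx_nat F (eq_hom p))).
  split.
  - split; [exact sG | split; [exact sH |]]. exists p. simpl. apply thx_unit. exact E.
  - apply transp_iso.
Qed.
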